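(* Let $p$ be a prime and $n,K$ positive integers. (1) If $p^K\equiv1\pmod n$, then $P(p,n)$ divides $p^K-1$. (2) If $p^K\equiv-1\pmod n$, then $P(p,n)$ divides $n(p^K-1)$.
   Context: For positive integers $m,n$, let $\mathbf{Z}_m$ be the integers modulo $m$ and $T:\mathbf{Z}_m^n\to\mathbf{Z}_m^n$, $T(a_0,\dots,a_{n-1})=(a_0+a_1,a_1+a_2,\dots,a_{n-1}+a_0)$. For $\mathbf{a}\in\mathbf{Z}_m^n$ the cycle length of $(T^k\mathbf{a})_{k\ge0}$ is the smallest positive integer $P$ such that there is $N$ with $T^{k+P}\mathbf{a}=T^k\mathbf{a}$ for all $k\ge N$. $P(m,n)$ denotes the maximum of these cycle lengths over all $\mathbf{a}\in\mathbf{Z}_m^n$. *)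

(* Defs.v *)
From mathcomp Require Import all_boot all_order all_algebra.
From Stdlib Require Import ClassicalEpsilon.
Set Implicit Arguments. Unset Strict Implicit. Unset Printing Implicit Defensive.
Import GRing.Theory.
Local Open Scope ring_scope.

(* Vectors of Z_m^n, indexed by 'I_n.  ('Z_m is Z/mZ for m >= 2; the main
   theorem only uses prime moduli.) *)
Definition vec (m n : nat) := {ffun 'I_n -> 'Z_m}.

Definition Tmap (m n : nat) (a : vec m n) : vec m n :=
  [ffun i : 'I_n => a i + a (ordS i)].

Definition is_eventual_period (m n : nat) (a : vec m n) (P : nat) : Prop :=
  exists N : nat, forall k : nat, (N <= k)%N ->
    iter (k + P) (@Tmap m n) a = iter k (@Tmap m n) a.

Definition is_cycle_length (m n : nat) (a : vec m n) (P : nat) : Prop :=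
  (0 < P)%N /\ is_eventual_period a P /\
  (forall Q : nat, (0 < Q)%N -> is_eventual_period a Q -> (P <= Q)%N).

Definition cycle_length (m n : nat) (a : vec m n) : nat :=
  epsilon (inhabits 0%N) (is_cycle_length a).

Definition Pmax (m n : nat) : nat := \max_(a : vec m n) cycle_length a.

(* Main.v *)
Require Import Defs.
From mathcomp Require Import all_boot all_order all_algebra.
From mathcomp Require Import zify.
From Stdlib Require Import Classical ClassicalEpsilon.
Set Implicit Arguments. Unset Strict Implicit. Unset Printing Implicit Defensive.
Import GRing.Theory.

Section Gen.
Variables (m n : nat) (a : vec m n).
Local Notation T := (@Tmap m n).

Lemma evp_mul P N j : (forall k, N <= k -> iter (k + P) T a = iter k T a) ->
  forall k, N <= k -> iter (k + j * P) T a = iter k T a.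
Proof.
move=> H k Hk; elim: j => [|j IH]; first by rewrite addn0.
by rewrite mulSn addnCA addnC H ?IH // (leq_trans Hk) // leq_addr.
Qed.

Lemma exists_cl M : 0 < M -> is_eventual_period a M -> exists P, is_cycle_length a P.
Proof.
elim: M {-2}M (leqnn M) => [|M IH] M' HM' HM'0 HP.
  by move: HM'0; rewrite leqn0 in HM'; rewrite (eqP HM').
case: (classic (exists Q, 0 < Q < M' /\ is_eventual_period a Q)).
  case=> Q [/andP [HQ0 HQ] HQP]; apply: (IH Q) => //.
  by rewrite -ltnS (leq_trans HQ).
move=> Hno; exists M'; split=> //; split=> // Q HQ HQP.
rewrite leqNgt; apply/negP => HQM; apply: Hno; exists Q; by rewrite HQ HQM.
Qed.

Lemma cl_dvd M : 0 < M -> is_eventual_period a M -> cycle_length a %| M.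
Proof.
move=> HM HMP.
have [P0 HP0] := exists_cl HM HMP.
have := epsilon_spec (inhabits 0%N) (is_cycle_length a) (ex_intro _ P0 HP0).
rewrite -/(cycle_length a); set P := cycle_length a.
case=> HP [[N1 HN1] Hmin].
case: HMP => N2 HN2.
rewrite /dvdn -leqn0 leqNgt; apply/negP => Hr0.
have := Hmin _ Hr0.
have -> : P <= M %% P = false by apply/negbTE; rewrite -ltnNge ltn_pmod.
move=> H; suff: false by []; apply: H; exists (maxn N1 N2) => k Hk.
have Hk1 : N1 <= k + M %% P by rewrite (leq_trans _ (leq_addr _ _)) // (leq_trans (leq_maxl _ _) Hk).
rewrite -(evp_mul (M %/ P) HN1 Hk1) -addnA (addnC (M %% P)) -divn_eq HN2 //.
by rewrite (leq_trans (leq_maxr _ _) Hk).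
Qed.
End Gen.

Lemma Pmax_dvd m n M : (forall a : vec m n, cycle_length a %| M) -> Pmax m n %| M.
Proof.
move=> H; rewrite /Pmax.
have ne : 0 < #|[pred x : vec m n | xpredT x]|.
  by apply/card_gt0P; exists [ffun=> 0%R].
have [a _ ->] := @eq_bigmax_cond (vec m n) xpredT (@cycle_length m n) ne.
exact: H.
Qed.

Section Mx.
Local Open Scope ring_scope.
Variables p' n' : nat.
Hypothesis hp : prime p'.+2.
Local Notation p := p'.+2.
Local Notation n := n'.+1.
Local Notation M := 'M['Z_p]_n.

Definition Sm (m : nat) : M := \matrix_(i, j) ((((j + m) %% n)%N == i)%:R).
Definition rv (a : vec p n) : 'rV['Z_p]_n := \row_j a j.
Definition A : M := 1 + Sm 1.

Lemma rvT a : rv (Tmap a) = rv a *m A.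
Proof.
apply/rowP => j; rewrite mulmxDr mulmx1 !mxE ffunE; congr (_ + _).
rewrite (bigD1 (ordS j)) //= big1 ?addr0.
  by rewrite !mxE addn1 eqxx mulr1.
move=> k Hk; rewrite !mxE.
have -> : (((j + 1) %% n)%N == k) = false.
  by apply/negbTE; apply: contra Hk => /eqP H; apply/eqP/val_inj; rewrite /= -H addn1.
by rewrite mulr0.
Qed.

Lemma SmM m l : Sm m *m Sm l = Sm (m + l).
Proof.
apply/matrixP => i j; rewrite !mxE.
pose k0 : 'I_n := Ordinal (ltn_pmod (j + l) (ltn0Sn n')).
rewrite (bigD1 k0) //= big1 ?addr0.
  rewrite !mxE eqxx mulr1 /= modnDml.
  by rewrite (addnC m) addnA.
move=> k Hk; rewrite !mxE.
have -> : (((j + l) %% n)%N == k) = false.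
  by apply/negbTE; apply: contra Hk => /eqP H; apply/eqP/val_inj; rewrite /= -H.
by rewrite mulr0.
Qed.

Lemma Sm_mod m : Sm m = Sm (m %% n).
Proof. by apply/matrixP => i j; rewrite !mxE modnDmr. Qed.

Lemma Sm0 : Sm 0 = 1.
Proof.
apply/matrixP => i j; rewrite !mxE addn0 modn_small // eq_sym.
by [].
Qed.

Lemma SmX m : Sm 1 ^+ m = Sm m.
Proof.
elim: m => [|m IH]; first by rewrite expr0 Sm0.
by rewrite exprS IH -mulmxE SmM add1n.
Qed.

Lemma iterT k a : rv (iter k (@Tmap p n) a) = rv a *m A ^+ k.
Proof.
elim: k => [|k IH]; first by rewrite expr0 mulmx1.
by rewrite iterS rvT IH exprSr -mulmxA.
Qed.

Lemma rv_inj : injective rv.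
Proof. by move=> a b H; apply/ffunP => j; have := congr1 (fun v : 'rV['Z_p]_n => v 0 j) H; rewrite /rv !mxE. Qed.

Lemma pcharM : (p \in [pchar M])%N.
Proof.
rewrite inE /=; apply/andP; split; first by [].
rewrite -(scaler_nat p (1 : M)) pchar_Zp // scale0r.
exact: eqxx.
Qed.

Lemma frob K : A ^+ (p ^ K) = 1 + Sm (p ^ K).
Proof.
elim: K => [|K IH]; first by rewrite expn0 expr1.
rewrite expnSr exprM IH.
have := pFrobenius_autD_comm pcharM (esym (commr1 (Sm (p ^ K)))).
rewrite !pFrobenius_autE expr1n => ->.
by rewrite -(SmX (p ^ K)) -exprM SmX.
Qed.

Lemma case1 K : (0 < K)%N -> (p ^ K = 1 %[mod n])%N ->
  forall a : vec p n, is_eventual_period a (p ^ K - 1).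
Proof.
move=> hK H a; exists 1%N => k Hk; apply: rv_inj; rewrite !iterT; congr (_ *m _).
have HA : A ^+ (p ^ K) = A by rewrite frob (Sm_mod (p ^ K)) H -Sm_mod.
have [q Hq] : exists q, (p ^ K = q.+1)%N by exists (p ^ K).-1; rewrite prednK // expn_gt0.
case: k Hk => [//|k] _.
by rewrite Hq subSS subn0 addSnnS exprD -Hq HA -exprSr.
Qed.

Lemma case2 K : (0 < K)%N -> (p ^ K + 1 = 0 %[mod n])%N ->
  forall a : vec p n, is_eventual_period a (n * (p ^ K - 1)).
Proof.
move=> hK H a; exists 1%N => k Hk; apply: rv_inj; rewrite !iterT; congr (_ *m _).
set B := Sm (p ^ K).
have HB : B * Sm 1 = 1 by rewrite -mulmxE SmM Sm_mod H mod0n Sm0.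
have HA : A ^+ (p ^ K) = B * A by rewrite frob /A mulrDr mulr1 HB addrC.
have cBA : GRing.comm B A.
  by rewrite /GRing.comm /A mulrDr mulrDl mulr1 mul1r -!mulmxE !SmM addnC.
have [q Hq] : exists q, (p ^ K = q.+1)%N by exists (p ^ K).-1; rewrite prednK // expn_gt0.
have claim : forall j k, A ^+ (k.+1 + j * q) = B ^+ j * A ^+ k.+1.
  elim=> [|j IH] k0; first by rewrite mul0n addn0 expr0 mul1r.
  have -> : (k0.+1 + j.+1 * q = (k0 + j * q) + q.+1)%N by rewrite mulSn; lia.
  rewrite exprD -Hq HA mulrA -(commrX (k0 + j * q) cBA) -mulrA -exprSr -addSn IH.
  by rewrite mulrA -exprS.
have Bn : B ^+ n = 1.
  by rewrite /B -(SmX (p ^ K)) -exprM SmX Sm_mod modnMl Sm0.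
case: k Hk => [//|k] _.
by rewrite Hq subSS subn0 claim Bn mul1r.
Qed.
End Mx.

Theorem proposition2p5 (p n K : nat) (hp : prime p) (hn : (0 < n)%N) (hK : (0 < K)%N) :
  (p ^ K = 1 %[mod n] -> Pmax p n %| p ^ K - 1) /\
  (p ^ K + 1 = 0 %[mod n] -> Pmax p n %| n * (p ^ K - 1)).
Proof.
case: p hp => [//|[//|p']] hp; case: n hn => [//|n'] _.
have hq : (0 < p'.+2 ^ K - 1)%N by rewrite subn_gt0 -{1}(expn0 p'.+2) ltn_exp2l.
split=> H; apply: Pmax_dvd => a; apply: cl_dvd.
- exact: hq.
- exact: case1.
- by rewrite muln_gt0.
- exact: case2.
Qed.
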